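(* Let $K$ be a field of characteristic zero. Suppose $F,G,H,E,\tilde E\in K[X]\setminus K$ and degree-one polynomials $a,b,c,\tilde a,\tilde b,\tilde c\in K[X]$ satisfy $F=E\circ H\circ a$, $G=E\circ c\circ H\circ b$, $F^t=\tilde E\circ H\circ\tilde a$, and $G^t=\tilde E\circ\tilde c\circ H\circ\tilde b$ for some integer $t>1$. Then there is a degree-one $e\in K[X]$ such that $F^{t-1}=G^{t-1}\circ e$.
   Context: $F^t$ denotes the $t$-th iterate of $F$ under composition $\circ$. *)

(* Defs.v *)
From mathcomp Require Import all_boot all_algebra.
Set Implicit Arguments. Unset Strict Implicit. Unset Printing Implicit Defensive.
Import GRing.Theory.
Local Open Scope ring_scope.

Definition poly_iter (K : fieldType) (F : {poly K}) (t : nat) : {poly K} :=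
  iter t (fun q => F \Po q) 'X.

(* Main.v *)
Require Import Defs.
From mathcomp Require Import all_boot all_algebra.
From mathcomp Require Import ring lra zify.
Import GRing.Theory.
Local Open Scope ring_scope.

Lemma natlem (a b x y N : nat) : a.-1 = x -> b.-1 = y -> (0 < a)%N -> (0 < b)%N ->
  (x + y)%N = N -> (a + b).-1 = N.+1.
Proof. lia. Qed.

Section Aux.
Variable K : fieldType.
Hypothesis charK0 : [pchar K] =i pred0.

Lemma core (A B C D : {poly K}) :
  (1 < size A)%N -> (1 < size B)%N -> size B = size D ->
  B \is monic -> D \is monic -> A \Po B = C \Po D -> (size (B - D)%R <= 1)%N.
Proof.
move=> hA hB hBD mB mD e.
set m := (size B).-1. set n := (size A).-1.
have m1 : (0 < m)%N by rewrite /m; lia.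
have n1 : (0 < n)%N by rewrite /n; lia.
have lA0 : lead_coef A != 0 by rewrite lead_coef_eq0 -size_poly_gt0; lia.
have lcAB : lead_coef (A \Po B) = lead_coef A.
  by rewrite lead_coef_comp // (monicP mB) expr1n mulr1.
have AB0 : A \Po B != 0 by rewrite -lead_coef_eq0 lcAB.
have Cn0 : C != 0 by apply/eqP => C0'; move: AB0; rewrite e C0' comp_poly0 eqxx.
have sC : (size C).-1 = n.
  have h1 := size_comp_poly A B; have h2 := size_comp_poly C D.
  rewrite e h2 -hBD -/m -/n in h1.
  by apply/eqP; rewrite -(eqn_pmul2r m1) h1.
have lcCD : lead_coef (C \Po D) = lead_coef C.
  by rewrite lead_coef_comp ?(monicP mD) ?expr1n ?mulr1 // -hBD.
have lC : lead_coef C = lead_coef A by rewrite -lcCD -e lcAB.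
set l := lead_coef A.
have hsz : forall P : {poly K}, (size P).-1 = n -> P != 0 -> lead_coef P = l ->
    (size (P - l *: 'X^n)%R <= n)%N.
  move=> P sP P0 lP; apply/leq_sizeP => j hj.
  rewrite coefB coefZ coefXn.
  have sP' : size P = n.+1 by rewrite -sP prednK // size_poly_gt0.
  case: (ltngtP j n) => [|jn|->]; first by lia.
  - by rewrite mulr0 subr0 nth_default // sP'.
  - by rewrite mulr1 -lP lead_coefE sP subrr.
set A0 := A - l *: 'X^n. set C0 := C - l *: 'X^n.
have sA0 : (size A0 <= n)%N by apply: hsz; rewrite // -lead_coef_eq0.
have sC0 : (size C0 <= n)%N by apply: hsz.
have eA : A = l *: 'X^n + A0 by rewrite /A0 addrC subrK.
have eC : C = l *: 'X^n + C0 by rewrite /C0 addrC subrK.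
clearbody A0 C0.
have key : l *: (B ^+ n - D ^+ n) = (C0 \Po D) - (A0 \Po B).
  move: e; rewrite eA eC !comp_polyD !comp_polyZ !comp_Xn_poly => e.
  rewrite scalerBr.
  have -> : l *: B ^+ n = l *: D ^+ n + (C0 \Po D) - (A0 \Po B) by rewrite -e addrK.
  ring.
set N := (n.-1 * m)%N.
have sK : (size (B ^+ n - D ^+ n)%R <= N.+1)%N.
  rewrite -(size_scale _ lA0) key.
  apply: leq_trans (size_polyD _ _) _; rewrite size_polyN geq_max.
  have b1 : forall P Q : {poly K}, (size P <= n)%N -> (size Q).-1 = m ->
      (size (P \Po Q) <= N.+1)%N.
    move=> P Q sP sQ; apply: leq_trans (size_comp_poly_leq _ _) _.
    by rewrite sQ ltnS leq_mul2r; apply/orP; right; lia.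
  by rewrite !b1 // -hBD.
rewrite subrXX in sK.
set S := \sum_(i < n) _ in sK.
have sT : forall i : 'I_n, size (B ^+ (n.-1 - i) * D ^+ i)%R = N.+1 /\
    lead_coef (B ^+ (n.-1 - i) * D ^+ i) = 1.
  move=> i.
  have mT : B ^+ (n.-1 - i) * D ^+ i \is monic by rewrite monicMl ?monic_exp.
  split; last exact/monicP.
  have p1 : B ^+ (n.-1 - i) != 0 by apply: monic_neq0; rewrite monic_exp.
  have p2 : D ^+ i != 0 by apply: monic_neq0; rewrite monic_exp.
  rewrite size_mul //.
  have := size_exp B (n.-1 - i); have := size_exp D i.
  have := size_poly_gt0 (B ^+ (n.-1 - i)); have := size_poly_gt0 (D ^+ i).
  rewrite p1 p2 -hBD -/m => q2 q1 s2 s1.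
  have hi : (i <= n.-1)%N by have := ltn_ord i; lia.
  have : (m * (n.-1 - i) + m * i = N)%N by rewrite -mulnDr subnK // mulnC.
  move=> hN; apply: natlem s1 s2 q1 q2 hN.
have SN : S`_N = n%:R.
  rewrite coef_sum (eq_bigr (fun _ => 1)); last first.
    by move=> i _; have [s1 l1] := sT i; rewrite -l1 lead_coefE s1.
  by rewrite sumr_const card_ord.
have nN : n%:R != 0 :> K by rewrite ((pcharf0P K).1 charK0); lia.
have sS : size S = N.+1.
  apply/eqP; rewrite eqn_leq; apply/andP; split.
    apply/leq_sizeP => j hj; rewrite coef_sum big1 // => i _.
    by rewrite nth_default // (sT i).1.
  by rewrite ltnNge; apply/negP => /leq_sizeP /(_ N (leqnn _)); rewrite SN; apply/eqP.
have S0 : S != 0 by rewrite -size_poly_gt0 sS.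
have [->|BD] := eqVneq (B - D) 0; first by rewrite size_poly0.
by move: sK; rewrite size_mul // sS; clear; move: (size (B - D)) => u; clearbody N; clear; lia.
Qed.


Lemma comp_cancel (P Q D : {poly K}) : (1 < size D)%N -> P \Po D = Q \Po D -> P = Q.
Proof.
move=> hD e; apply/eqP; rewrite -subr_eq0; apply/eqP.
have e0 : (P - Q) \Po D = 0 by rewrite comp_polyB e subrr.
have := size_comp_poly (P - Q) D; rewrite e0 size_poly0 /= => /esym/eqP.
rewrite muln_eq0 => /orP [h|h]; last by move: h hD; case: (size D) => [|[|]].
have h1 : (size (P - Q)%R <= 1)%N by move: h; case: (size _) => [|[|]].
by move: e0; rewrite (size1_polyC h1) comp_polyC.
Qed.

Lemma size_comp_gt1 (p q : {poly K}) : (1 < size p)%N -> (1 < size q)%N ->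
  (1 < size (p \Po q))%N.
Proof.
move=> hp hq; have h := size_comp_poly p q.
have h0 : (0 < (size p).-1 * (size q).-1)%N by rewrite muln_gt0; apply/andP; split; lia.
by rewrite -h in h0; move: h0; case: (size _) => [|[|]].
Qed.

Lemma key (A B C D : {poly K}) :
  (1 < size A)%N -> (1 < size B)%N -> size B = size D -> A \Po B = C \Po D ->
  exists l : {poly K}, size l = 2%N /\ B = l \Po D /\ C = A \Po l.
Proof.
move=> hA hB hBD e.
have hD : (1 < size D)%N by rewrite -hBD.
set lb := lead_coef B. set ld := lead_coef D.
have lb0 : lb != 0 by rewrite lead_coef_eq0 -size_poly_gt0; lia.
have ld0 : ld != 0 by rewrite lead_coef_eq0 -size_poly_gt0; lia.
set B' := lb^-1 *: B. set D' := ld^-1 *: D.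
have mB : B' \is monic by rewrite monicE lead_coefZ mulVf.
have mD : D' \is monic by rewrite monicE lead_coefZ mulVf.
have eB : B = (lb *: 'X) \Po B' by rewrite comp_polyZ comp_polyX scalerA mulfV // scale1r.
have eD : D = (ld *: 'X) \Po D' by rewrite comp_polyZ comp_polyX scalerA mulfV // scale1r.
have s2b : size (lb *: 'X : {poly K}) = 2%N by rewrite size_scale // size_polyX.
have e' : (A \Po (lb *: 'X)) \Po B' = (C \Po (ld *: 'X)) \Po D'
  by rewrite -!comp_polyA -eB -eD.
have := core (A \Po (lb *: 'X)) B' (C \Po (ld *: 'X)) D'.
rewrite size_comp_poly2 // !size_scale ?invr_eq0 // => /(_ hA hB hBD mB mD e') h1.
have ek := size1_polyC h1; set k := _`_0 in ek.
set l := (lb / ld) *: ('X + (ld * k)%:P).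
have eBl : B = l \Po D.
  rewrite /l comp_polyZ comp_polyD comp_polyX comp_polyC.
  have -> : B = lb *: B' by rewrite scalerA mulfV // scale1r.
  have -> : B' = D' + k%:P by rewrite -ek addrC subrK.
  rewrite /D' scalerDr scalerA scalerDr -!mul_polyC -!polyCM; congr (_ + _).
  by rewrite mulrA divfK.
exists l; split; first by rewrite size_scale ?size_XaddC // mulf_neq0 // invr_eq0.
split=> //; apply: (comp_cancel _ _ _ hD); rewrite -e eBl comp_polyA //.
Qed.

Lemma lin_inv (l : {poly K}) : size l = 2%N ->
  exists li : {poly K}, size li = 2%N /\ l \Po li = 'X.
Proof.
move=> hl.
have el : l = l`_1 *: 'X + (l`_0)%:P.
  apply/polyP => i; rewrite coefD coefZ coefX coefC.
  case: i => [|[|i]] /=; rewrite ?mulr0 ?add0r ?addr0 ?mulr1 //.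
  by rewrite nth_default // hl.
have u0 : l`_1 != 0.
  by have := lead_coef_eq0 l; rewrite lead_coefE hl /= => ->; rewrite -size_poly_eq0 hl.
exists ((l`_1)^-1 *: ('X - (l`_0)%:P)); split.
  by rewrite size_scale ?size_XsubC // invr_eq0.
rewrite [l in l \Po _]el comp_polyD comp_polyZ comp_polyX comp_polyC scalerA mulfV // scale1r.
by rewrite subrK.
Qed.

End Aux.

Lemma poly_iterS (K : fieldType) (F : {poly K}) n :
  poly_iter F n.+1 = poly_iter F n \Po F.
Proof.
elim: n => [|n IH]; first by rewrite /poly_iter /= comp_polyXr comp_polyX.
by rewrite /poly_iter /= -/(poly_iter F n) -comp_polyA -IH.
Qed.

Lemma size_iter (K : fieldType) (F : {poly K}) n : (1 < size F)%N -> (0 < n)%N ->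
  (1 < size (poly_iter F n))%N.
Proof.
move=> hF; elim: n => [//|[|n] IH _]; first by rewrite poly_iterS /poly_iter /= comp_polyX.
by rewrite poly_iterS; apply: size_comp_gt1 => //; apply: IH.
Qed.


Arguments key {K} charK0 {A B C D}.
Arguments comp_cancel {K P Q D}.
Arguments size_comp_gt1 {K p q}.
Arguments lin_inv {K l}.

Theorem lemma3p1 (K : fieldType) (charK0 : [pchar K] =i pred0)
  (F G H E Et a b c at_ bt ct : {poly K}) (t : nat)
  (hF : (1 < size F)%N) (hG : (1 < size G)%N) (hH : (1 < size H)%N)
  (hE : (1 < size E)%N) (hEt : (1 < size Et)%N)
  (ha : size a = 2%N) (hb : size b = 2%N) (hc : size c = 2%N)
  (hat : size at_ = 2%N) (hbt : size bt = 2%N) (hct : size ct = 2%N)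
  (ht : (1 < t)%N)
  (eF : F = E \Po (H \Po a))
  (eG : G = E \Po (c \Po (H \Po b)))
  (eFt : poly_iter F t = Et \Po (H \Po at_))
  (eGt : poly_iter G t = Et \Po (ct \Po (H \Po bt))) :
  exists e : {poly K}, size e = 2%N /\
    poly_iter F t.-1 = poly_iter G t.-1 \Po e.
Proof.
have ht' : t = t.-1.+1 by lia.
set Fp := poly_iter F t.-1. set Gp := poly_iter G t.-1.
have sFp : (1 < size Fp)%N by apply: size_iter; lia.
have sGp : (1 < size Gp)%N by apply: size_iter; lia.
rewrite ht' poly_iterS -/Fp eF comp_polyA in eFt.
rewrite ht' poly_iterS -/Gp eG !comp_polyA in eGt.
have eG2 : (Gp \Po (E \Po c)) \Po (H \Po b) = (Et \Po ct) \Po (H \Po bt)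
  by rewrite !comp_polyA in eGt *.
have sHat : (1 < size (H \Po at_))%N by rewrite size_comp_poly2.
have sHbt : (1 < size (H \Po bt))%N by rewrite size_comp_poly2.
have [l1 [hl1 [_ e1]]] := key charK0 hEt sHat
  (etrans (size_comp_poly2 _ hat) (esym (size_comp_poly2 _ ha))) (esym eFt).
have sEtct : (1 < size (Et \Po ct))%N by rewrite size_comp_poly2.
have [l2 [hl2 [_ e2]]] := key charK0 sEtct sHbt
  (etrans (size_comp_poly2 _ hbt) (esym (size_comp_poly2 _ hb))) (esym eG2).
have [li [hli eli]] := lin_inv hl1.
have eEt : Et = (Fp \Po E) \Po li by rewrite e1 -comp_polyA eli comp_polyXr.
have e3 : Gp \Po (E \Po c) = Fp \Po (((E \Po li) \Po ct) \Po l2)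
  by rewrite e2 eEt !comp_polyA.
have sEc : (1 < size (E \Po c))%N by rewrite size_comp_poly2.
have sD : size (E \Po c) = size (((E \Po li) \Po ct) \Po l2) by rewrite !size_comp_poly2.
have [l [hl [_ e4]]] := key charK0 sGp sEc sD e3.
by exists l.
Qed.
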